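(* Let $p$ be a prime and $G$ a $p$-group of order $p^m$ with $|G/Z(G)|=p^2$. Then $$B_G(t)=\frac{1-p^{m-3}t}{(1-p^{m-2}t)(1-p^{m-1}t)}.$$
   Context: For a finite group $G$ and $n\ge0$, let $G^{(n)}=\{(x_1,\dots,x_n)\in G^n: x_ix_j=x_jx_i\ \forall i,j\}$, on which $G$ acts by simultaneous conjugation; let $\beta_{G,n}$ be the number of orbits and $B_G(t)=\sum_{n\ge0}\beta_{G,n}t^n$, viewed as a rational function of $t$. *)

(* Defs.v *)
From HB Require Import structures.
From mathcomp Require Import all_boot all_order all_algebra all_fingroup all_solvable.
Set Implicit Arguments. Unset Strict Implicit. Unset Printing Implicit Defensive.
Import GRing.Theory.
Open Scope group_scope.

Definition commuting_tuples (gT : finGroupType) (G : {set gT}) (n : nat)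
  : {set {ffun 'I_n -> gT}} :=
  [set x : {ffun 'I_n -> gT} | [forall i, x i \in G] &&
     [forall i, forall j, x i * x j == x j * x i]].

Definition conj_tuple (gT : finGroupType) (n : nat) (x : {ffun 'I_n -> gT}) (g : gT)
  : {ffun 'I_n -> gT} := [ffun i => x i ^ g].

Definition tuple_orbit (gT : finGroupType) (G : {set gT}) (n : nat)
  (x : {ffun 'I_n -> gT}) : {set {ffun 'I_n -> gT}} :=
  [set conj_tuple x g | g in G].

Definition beta (gT : finGroupType) (G : {set gT}) (n : nat) : nat :=
  #|[set tuple_orbit G x | x in commuting_tuples G n]|.

(* truncation of the generating function B_G(t) to degree N, as a rational polynomial *)
Definition B_trunc (gT : finGroupType) (G : {set gT}) (N : nat) : {poly rat} :=
  (\sum_(n < N.+1) ((beta G n)%:R : rat) *: 'X^n)%R.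

(* Main.v *)
Require Import Defs.
From HB Require Import structures.
From mathcomp Require Import all_boot all_order all_algebra all_fingroup all_solvable.
From mathcomp Require Import zify ring lra.
Import GRing.Theory Num.Theory.

Lemma conj_fix_comm (gT : finGroupType) (x y : gT) : (x ^ y == x) = (x * y == y * x).
Proof.
apply/eqP/eqP => [h | h].
  by rewrite conjgC h.
by apply: (mulgI y); rewrite -conjgC.
Qed.

Section Grp.
Variables (gT : finGroupType) (G : {group gT}) (p j : nat).
Hypotheses (hp : prime p) (hG : #|G| = (p ^ j.+3)%N) (hZ : #|'Z(G)| = (p ^ j.+1)%N).

Lemma mid_card (H : {group gT}) :
  'Z(G) \subset H -> H \subset G -> ~~ (H \subset 'Z(G)) -> ~~ (G \subset H) ->
  #|H| = (p ^ j.+2)%N.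
Proof.
move=> sZH sHG nHZ nGH.
have p1 := prime_gt1 hp.
have : #|H| %| p ^ j.+3 by rewrite -hG cardSg.
case/(dvdn_pfactor _ _ hp) => f lef eH.
have : p ^ j.+1 %| p ^ f by rewrite -hZ -eH cardSg.
rewrite dvdn_Pexp2l // => lef2.
have hf1 : f != j.+1.
  apply/eqP => ef.
  have e : 'Z(G) == H :> {set gT} by rewrite eqEcard sZH eH hZ ef leqnn.
  by rewrite -(eqP e) subxx in nHZ.
have hf3 : f != j.+3.
  apply/eqP => ef.
  have e : H == G :> {set gT} by rewrite eqEcard sHG eH hG ef leqnn.
  by rewrite (eqP e) subxx in nGH.
rewrite eH; suff -> : f = j.+2 by []; move: lef lef2 hf1 hf3; clear; move: f j; lia.
Qed.
End Grp.

Section Act.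
Variables (gT : finGroupType) (n : nat).

Lemma ct1 : (fun x : {ffun 'I_n -> gT} => conj_tuple x 1) =1 id.
Proof. by move=> x; apply/ffunP => i; rewrite ffunE conjg1. Qed.

Lemma ctM (x : {ffun 'I_n -> gT}) : act_morph (@conj_tuple gT n) x.
Proof. by move=> a b; apply/ffunP => i; rewrite !ffunE conjgM. Qed.

Definition tact := TotalAction ct1 ctM.

Variable G : {group gT}.
Let S := commuting_tuples G n.

Lemma beta_eq : beta G n = #|orbit tact G @: S|.
Proof. by []. Qed.

Lemma acts_S : [acts G, on S | tact].
Proof.
apply/actsP => a Ga x /=; rewrite !inE.
congr andb.
  by apply: eq_forallb => i; rewrite ffunE groupJr.
apply: eq_forallb => i; apply: eq_forallb => k.
by rewrite !ffunE -!conjMg (inj_eq (@conjg_inj _ a)).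
Qed.

Lemma stab_mem x a :
  (a \in 'C_G[x | tact]) = (a \in G) && [forall i, x i * a == a * x i].
Proof.
rewrite inE; congr andb.
apply/astab1P/forallP => [h i | h].
  by rewrite -conj_fix_comm; move/ffunP: h => /(_ i); rewrite /= ffunE => ->.
by apply/ffunP => i; rewrite /= ffunE; apply/eqP; rewrite conj_fix_comm.
Qed.

Lemma sum_stab : \sum_(x in S) #|'C_G[x | tact]| = (beta G n * #|G|)%N.
Proof.
rewrite beta_eq -(Frobenius_Cauchy acts_S).
transitivity (\sum_(x in S) \sum_(a in G) ((tact x a == x) : nat)).
  apply: eq_bigr => x _; rewrite -sum1_card [LHS]big_mkcond [RHS]big_mkcond.
  apply: eq_bigr => a _; rewrite inE; case: (a \in G) => //=.
  have -> : (a \in 'C[x|tact]) = (conj_tuple x a == x) by apply/astab1P/eqP.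
  by case: eqP.
rewrite exchange_big /=; apply: eq_bigr => a Ga.
rewrite -sum1_card [LHS]big_mkcond [RHS]big_mkcond.
apply: eq_bigr => x _; rewrite [x \in 'Fix_(S | tact)[a]]inE; case: (x \in S) => //=.
have -> : (x \in 'Fix_tact[a]) = (conj_tuple x a == x) by apply/afix1P/eqP.
by case: eqP.
Qed.
End Act.

Section Main.
Variables (gT : finGroupType) (G : {group gT}) (p j : nat).
Hypotheses (hp : prime p) (hG : #|G| = (p ^ j.+3)%N) (hZ : #|'Z(G)| = (p ^ j.+1)%N).

Lemma stab_card n (x : {ffun 'I_n -> gT}) : x \in commuting_tuples G n ->
  #|'C_G[x | tact gT n]| = if [forall i, x i \in 'Z(G)] then (p ^ j.+3)%N else (p ^ j.+2)%N.
Proof.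
rewrite inE => /andP[/forallP xG /forallP xC].
case: ifP => [/forallP xZ | /negbT /forallPn [i0 hi0]].
  rewrite -hG; suff -> : 'C_G[x | tact gT n] = G by []; apply/eqP; rewrite eqEsubset subsetIl /=.
  apply/subsetP => a Ga; rewrite stab_mem Ga /=; apply/forallP => i.
  by case/centerP: (xZ i) => _ /(_ a Ga) ->.
apply: (@mid_card gT G p j hp hG hZ ('C_G[x | tact gT n])%G) => /=.
- apply/subsetP => z /centerP [zG zc]; rewrite stab_mem zG /=.
  by apply/forallP => i; rewrite (zc _ (xG i)).
- exact: subsetIl.
- apply/negP => sub; case/negP: hi0; apply: (subsetP sub).
  by rewrite stab_mem xG /=; apply/forallP => i; apply: (forallP (xC i)).
- apply/negP => sub; case/negP: hi0; apply/centerP; split => // y Gy.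
  move: (subsetP sub y Gy); rewrite stab_mem => /andP[_ /forallP /(_ i0) /eqP]. done.
Qed.
End Main.

Section Main2.
Variables (gT : finGroupType) (G : {group gT}) (p j : nat).
Hypotheses (hp : prime p) (hG : #|G| = (p ^ j.+3)%N) (hZ : #|'Z(G)| = (p ^ j.+1)%N).

Lemma central_count n :
  (\sum_(x in commuting_tuples G n) [forall i, x i \in 'Z(G)] = (p ^ j.+1) ^ n)%N.
Proof.
rewrite -hZ -[n in RHS]card_ord -card_ffun_on.
rewrite (eq_bigr (fun x : {ffun 'I_n -> gT} => if [forall i, x i \in 'Z(G)] then 1 else 0)%N); last first.
  by move=> x _; case: ifP.
rewrite -big_mkcondr sum1_card; apply: eq_card => x; rewrite !inE.
apply/andP/forallP => [[_ /forallP h] // | h]; split; last by apply/forallP.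
rewrite inE; apply/andP; split; apply/forallP => i.
  by case/centerP: (h i).
apply/forallP => k; apply/eqP.
by case/centerP: (h i) => _; apply; case/centerP: (h k).
Qed.

Lemma sum_formula n :
  (beta G n * p ^ j.+3 = p ^ j.+2 * #|commuting_tuples G n|
     + (p ^ j.+3 - p ^ j.+2) * (p ^ j.+1) ^ n)%N.
Proof.
rewrite -hG -sum_stab.
rewrite (eq_bigr (fun x : {ffun 'I_n -> gT} => p ^ j.+2 + [forall i, x i \in 'Z(G)] * (p ^ j.+3 - p ^ j.+2)))%N; last first.
  move=> x Sx; rewrite (@stab_card gT G p j hp hG hZ n x Sx).
  case: ifP => _; rewrite ?mul1n ?mul0n ?addn0 // subnKC //.
  by rewrite leq_pexp2l ?prime_gt0.
rewrite big_split /= sum_nat_const -big_distrl /= central_count.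
by rewrite hG [(#|_| * _)%N]mulnC [((_ ^ n) * _)%N]mulnC.
Qed.
End Main2.

Section Ext.
Variables (gT : finGroupType) (G : {group gT}) (n : nat).

Definition ext (x : {ffun 'I_n -> gT}) (g : gT) : {ffun 'I_n.+1 -> gT} :=
  [ffun i => if unlift ord_max i is Some k then x k else g].

Definition hinv (y : {ffun 'I_n.+1 -> gT}) : {ffun 'I_n -> gT} * gT :=
  ([ffun k => y (lift ord_max k)], y ord_max).

Lemma ext_lift x g k : ext x g (lift ord_max k) = x k.
Proof. by rewrite ffunE liftK. Qed.

Lemma ext_max x g : ext x g ord_max = g.
Proof. by rewrite ffunE unlift_none. Qed.

Lemma ext_bij : bijective (fun u : {ffun 'I_n -> gT} * gT => ext u.1 u.2).
Proof.
exists hinv => [[x g] | y] /=.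
  by rewrite /hinv ext_max; congr (_, _); apply/ffunP => k; rewrite ffunE ext_lift.
apply/ffunP => i; rewrite ffunE.
by case: unliftP => [k ->|->] //=; rewrite ffunE.
Qed.

Lemma ext_mem x g : (ext x g \in commuting_tuples G n.+1) =
  (x \in commuting_tuples G n) && (g \in 'C_G[x | tact gT n]).
Proof.
rewrite stab_mem !inE; apply/idP/idP.
  case/andP => /forallP h1 /forallP h2.
  have h2' := fun i k => forallP (h2 i) k.
  apply/andP; split; first (apply/andP; split).
  - by apply/forallP => k; rewrite -(ext_lift x g k).
  - apply/forallP => k; apply/forallP => l.
    by have := h2' (lift ord_max k) (lift ord_max l); rewrite !ext_lift.
  apply/andP; split; first by rewrite -(ext_max x g).
  apply/forallP => k.
  by have := h2' (lift ord_max k) ord_max; rewrite ext_lift ext_max.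
case/andP => /andP[/forallP h1 /forallP h2] /andP[Gg /forallP h3].
have h2' := fun i k => forallP (h2 i) k.
apply/andP; split.
  by apply/forallP => i; case: (unliftP ord_max i) => [k ->|->]; rewrite ?ext_lift ?ext_max.
apply/forallP => i; apply/forallP => l.
case: (unliftP ord_max i) => [k ->|->]; case: (unliftP ord_max l) => [k' ->|->];
  rewrite ?ext_lift ?ext_max //.
by rewrite eq_sym.
Qed.

Lemma card_succ : #|commuting_tuples G n.+1| =
  (\sum_(x in commuting_tuples G n) #|'C_G[x | tact gT n]|)%N.
Proof.
rewrite -sum1_card (reindex _ (onW_bij _ ext_bij)) /=.
rewrite (eq_bigr (fun x => \sum_(g in 'C_G[x | tact gT n]) 1)%N); last first.
  by move=> x _; rewrite sum1_card.
rewrite pair_big_dep /=; apply: eq_bigl => u; exact: ext_mem.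
Qed.
End Ext.

Lemma card_ct0 (gT : finGroupType) (G : {group gT}) : #|commuting_tuples G 0| = 1%N.
Proof.
suff -> : commuting_tuples G 0 = setT by rewrite cardsT card_ffun card_ord expn0.
by apply/setP => x; rewrite !inE; apply/andP; split; apply/forallP => - [].
Qed.

Local Open Scope ring_scope.

Lemma alg (q a : rat) (bt T : nat -> rat) : q != 0 -> a != 0 ->
 (forall n, bt n * (a*q^+3) = a*q^+2 * T n + (a*q^+3 - a*q^+2) * (a*q)^+n) ->
 (forall n, T n.+1 = bt n * (a*q^+3)) -> T 0%N = 1 ->
 [/\ bt 0%N = 1, bt 1%N - (a*q + a*q^+2) * bt 0%N = - a &
   forall n, bt n.+2 - (a*q + a*q^+2) * bt n.+1 + (a*q)*(a*q^+2) * bt n = 0].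
Proof.
move=> qn an F Ts T0.
have R n : bt n.+1 = (a * q^+3 * bt n + (q - 1) * (a*q)^+n.+1) / q.
  have := F n.+1; rewrite Ts => h.
  apply: (mulIf (mulf_neq0 an (expf_neq0 3 qn))); rewrite h; field.
  by rewrite qn.
have B0 : bt 0%N = 1.
  have := F 0%N; rewrite T0 expr0 => h.
  apply: (mulIf (mulf_neq0 an (expf_neq0 3 qn))); rewrite h; ring.
split => //.
  by rewrite R B0; field.
move=> n; rewrite (R n.+1) (R n) [(a*q)^+n.+2]exprS; set u := (a*q)^+n.+1; field; exact: qn.
Qed.

Lemma coef_lemma (b c : rat) (P : {poly rat}) k :
 ((1 - b%:P * 'X) * (1 - c%:P * 'X) * P)`_k =
 P`_k - (b + c) * (if k is k'.+1 then P`_k' else 0)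
   + b * c * (if k is k'.+2 then P`_k' else 0).
Proof.
have -> : (1 - b%:P * 'X) * (1 - c%:P * 'X) * P =
   P - (b + c)%:P * ('X * P) + (b * c)%:P * ('X * ('X * P)).
  rewrite polyCD polyCM; ring.
rewrite coefD coefB !coefCM !coefXM.
by case: k => [|[|k]] //=; rewrite ?mulr0 ?subr0 ?addr0 //.
Qed.

Lemma coef_rhs (a : rat) k :
  (1 - a%:P * 'X)`_k = (if k == 0%N then 1 else 0) - (if k == 1%N then a else 0).
Proof.
rewrite coefB coef1 coefCM coefX.
by case: k => [|[|k]] //=; rewrite ?mulr0 ?mulr1.
Qed.

Lemma coefB_trunc (gT : finGroupType) (G : {set gT}) N i :
  (B_trunc G N)`_i = if (i < N.+1)%N then (beta G i)%:R else 0.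
Proof. by rewrite /B_trunc -(poly_def N.+1 (fun n => ((beta G n)%:R : rat))) coef_poly. Qed.

Lemma cast_eq (B T P1 P2 P3 n : nat) :
  (B * P3 = P2 * T + (P3 - P2) * P1 ^ n)%N -> (P2 <= P3)%N ->
  (B%:R * P3%:R = P2%:R * T%:R + (P3%:R - P2%:R) * P1%:R ^+ n :> rat).
Proof.
move=> h le; have := congr1 (fun x : nat => (x%:R : rat)) h.
by rewrite /= natrD !natrM natrB // natrX.
Qed.

Theorem theorem8p2 (gT : finGroupType) (G : {group gT}) (p m : nat)
  (hp : prime p) (hG : #|G| = (p ^ m)%N)
  (hZ : #|(G / 'Z(G))%g| = (p ^ 2)%N) :
  forall N k : nat, (k <= N)%N ->
    (((1 - ((p ^ (m - 2))%:R : rat)%:P * 'X) * (1 - ((p ^ (m - 1))%:R : rat)%:P * 'X)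
       * B_trunc G N)`_k
     = (1 - ((p ^ (m - 3))%:R : rat)%:P * 'X)`_k)%R.
Proof.
move=> N k hk.
have p1 := prime_gt1 hp.
have hZm : (#|'Z(G)| * p ^ 2 = p ^ m)%N.
  by rewrite -hZ card_quotient ?normal_norm ?center_normal // Lagrange ?center_sub.
have [j hm hz] : exists2 j, m = j.+3 & #|'Z(G)| = (p ^ j.+1)%N.
  have : (#|'Z(G)| %| p ^ m)%N by rewrite -hZm dvdn_mulr.
  case/(dvdn_pfactor _ _ hp) => e _ he.
  have em : m = (e + 2)%N by apply: (expnI p1); rewrite expnD -he hZm.
  case: e he em => [|j] he em.
    exfalso.
    have Z1 : 'Z(G) = 1%G :> {set gT} by apply/eqP; rewrite trivg_card1 he.
    have pG : p.-group G by rewrite /pgroup hG pnatX pnat_id.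
    have := trivg_center_pgroup pG Z1.
    move/(congr1 (fun H : {set gT} => #|H|)); rewrite cards1 hG em add0n => h.
    by move: (ltn_exp2l 0 2 p1); rewrite h.
  by exists j => //; rewrite em addn2.
subst m.
rewrite !subSS !subn0 coef_lemma coef_rhs !coefB_trunc.
set q : rat := p%:R; set a : rat := (p ^ j)%:R.
have qn : q != 0 by rewrite pnatr_eq0 -lt0n prime_gt0.
have an : a != 0 by rewrite pnatr_eq0 -lt0n expn_gt0 prime_gt0.
have e1 : ((p ^ j.+1)%:R : rat) = a * q by rewrite /a /q !natrX exprSr.
have e2 : ((p ^ j.+2)%:R : rat) = a * q ^+ 2 by rewrite /a /q !natrX -addn2 exprD.
have e3 : ((p ^ j.+3)%:R : rat) = a * q ^+ 3 by rewrite /a /q !natrX -addn3 exprD.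
set bt := fun n => ((beta G n)%:R : rat).
set T := fun n => ((#|commuting_tuples G n|)%:R : rat).
have F n : bt n * (a*q^+3) = a*q^+2 * T n + (a*q^+3 - a*q^+2) * (a*q)^+n.
  have h := @sum_formula gT G p j hp hG hz n.
  have le23 : (p ^ j.+2 <= p ^ j.+3)%N by rewrite leq_pexp2l ?prime_gt0.
  have := cast_eq _ _ _ _ _ _ h le23.
  rewrite e3 e2 e1 => ->.
  by rewrite /T mulrC.
have Ts n : T n.+1 = bt n * (a*q^+3).
  by rewrite /T /bt card_succ sum_stab hG natrM e3.
have T0 : T 0%N = 1 by rewrite /T card_ct0.
have [B0 B1 B2] := alg _ _ _ _ qn an F Ts T0.
move: B0 B1 B2; rewrite /bt /= => B0 B1 B2.
rewrite e1 e2.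
case: k hk => [|[|k]] hk /=; rewrite ?coefB_trunc.
- by rewrite B0 !mulr0 !subr0 ?addr0.
- rewrite ltnS hk ltn0Sn mulr0 addr0 sub0r.
  exact: B1.
- rewrite !ltnS hk (ltnW hk) (ltnW (ltnW hk)) subrr.
  exact: B2.
Qed.
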